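(* Let $X$ be a set and $z$ an element not contained in $X$. Every rack (resp. quandle) on $X$ embeds into a rack (resp. quandle) on $X\cup\{z\}$, i.e., is a subrack (resp. subquandle) of some rack (resp. quandle) defined on $X\cup\{z\}$.
   Context: A rack is a groupoid $(X,* )$ whose left translations $y\mapsto x*y$ are bijections and which satisfies $x*(y*z)=(x*y)*(x*z)$; a quandle is a rack satisfying $x*x=x$. *)

(* Defs.v *)
From mathcomp Require Import ssreflect ssrfun ssrbool.
Set Implicit Arguments. Unset Strict Implicit. Unset Printing Implicit Defensive.

Definition is_rack (T : Type) (op : T -> T -> T) : Prop :=
  (forall x : T, bijective (op x)) /\
  (forall x y z : T, op x (op y z) = op (op x y) (op x z)).

Definition is_quandle (T : Type) (op : T -> T -> T) : Prop :=
  is_rack op /\ (forall x : T, op x x = x).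

(* X ∪ {z} with z ∉ X is modelled by [option X]: [Some x] is x ∈ X, [None] is z.
   (X, op) is a subrack/subquandle of (option X, op') when the inclusion
   [Some] is a homomorphism, i.e. op' restricted to X is op. *)
Definition extends (T : Type) (op : T -> T -> T) (op' : option T -> option T -> option T) : Prop :=
  forall x y : T, op' (Some x) (Some y) = Some (op x y).

(* Main.v *)
Require Import Defs.
From mathcomp Require Import ssreflect ssrfun ssrbool.

Definition ext_op {X : Type} (op : X -> X -> X) (a b : option X) : option X :=
  match a, b with
  | Some x, Some y => Some (op x y)
  | Some _, None => None
  | None, b => b
  end.

Lemma ext_rack (X : Type) (op : X -> X -> X) : is_rack op -> is_rack (ext_op op).
Proof.
move=> [Hb Hd]; split.
- case=> [x|]; last by exists id.
  have [g Hg1 Hg2] := Hb x.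
  exists (fun b => match b with Some y => Some (g y) | None => None end).
  + by case=> [y|] //=; rewrite Hg1.
  + by case=> [y|] //=; rewrite Hg2.
- case=> [x|] [y|] [z|] //=; by rewrite Hd.
Qed.

Theorem proposition3p9 :
  (forall (X : Type) (op : X -> X -> X), is_rack op ->
     exists op' : option X -> option X -> option X, is_rack op' /\ extends op op') /\
  (forall (X : Type) (op : X -> X -> X), is_quandle op ->
     exists op' : option X -> option X -> option X, is_quandle op' /\ extends op op').
Proof.
split.
- move=> X op H; exists (ext_op op); split; [exact: ext_rack | by []].
- move=> X op [H Hi]; exists (ext_op op); split; last by [].
  split; first exact: ext_rack.
  by case=> [x|] //=; rewrite Hi.
Qed.
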